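(* Let $\|\cdot\|_\alpha$ be a norm from a dimension-invariant family of matrix norms, let $u>0$, and let $A$ be $n\times n$ with blocking $\mathcal{I}$ having $n_t$ blocks. Let $\widehat L$ be block lower triangular and $\widehat R$ block upper triangular (with respect to $\mathcal{I}$), and let $A^{(1)}=A,A^{(2)},\dots,A^{(n_t)}$ be matrices where $A^{(k)}$ has block rows and columns indexed $k,\dots,n_t$. Write $\mathcal{T}_k=k+1:n_t$. Assume that for all $1\le k\le n_t$, $$A^{(k)}_{kk}=\widehat L_{kk}\widehat R_{kk}+E^{(k)}_{11},\quad \|E^{(k)}_{11}\|_\alpha\le c^{(k)}_{11}u\|A^{(k)}_{kk}\|_\alpha,$$ and that for all $1\le k\le n_t-1$, $$A^{(k)}_{k\mathcal{T}_k}=\widehat L_{kk}\widehat R_{k\mathcal{T}_k}+E^{(k)}_{12},\quad \|E^{(k)}_{12}\|_\alpha\le c^{(k)}_{12}u\|\widehat L_{kk}\|_\alpha\|\widehat R_{k\mathcal{T}_k}\|_\alpha,$$ $$A^{(k)}_{\mathcal{T}_kk}=\widehat L_{\mathcal{T}_kk}\widehat R_{kk}+E^{(k)}_{21},\quad \|E^{(k)}_{21}\|_\alpha\le c^{(k)}_{21}u\|\widehat L_{\mathcal{T}_kk}\|_\alpha\|\widehat R_{kk}\|_\alpha,$$ $$A^{(k+1)}=A^{(k)}_{\mathcal{T}_k\mathcal{T}_k}-\widehat L_{\mathcal{T}_kk}\widehat R_{k\mathcal{T}_k}+E^{(k)}_{22},\quad \|E^{(k)}_{22}\|_\alpha\le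 c^{(k)}_{22A}u\|A^{(k)}_{\mathcal{T}_k\mathcal{T}_k}\|_\alpha+c^{(k)}_{22LU}u\|\widehat L_{\mathcal{T}_kk}\|_\alpha\|\widehat R_{k\mathcal{T}_k}\|_\alpha,$$ with nonnegative constants $c^{(k)}_{\ast}$. Let $\rho=\max_{1\le k\le n_t}\|A^{(k)}\|_\alpha/\|A\|_\alpha$. Then $$\|A-\widehat L\widehat R\|_\alpha\le C_Au\rho\|A\|_\alpha+C_{LU}u\|\widehat L\|_\alpha\|\widehat R\|_\alpha,$$ where $C_A=\sum_{k=1}^{n_t}c^{(k)}_{11}+\sum_{k=1}^{n_t-1}c^{(k)}_{22A}$ and $C_{LU}=\sum_{k=1}^{n_t-1}\big(c^{(k)}_{21}+c^{(k)}_{12}+c^{(k)}_{22LU}\big)$.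
   Context: A dimension-invariant family of matrix norms is a choice of norm for matrices of every size such that for every matrix $B$ and every partition of its rows and columns into contiguous blocks $B_{i,j}$, $\max_{i,j}\|B_{i,j}\|\le\|B\|\le\sum_{i,j}\|B_{i,j}\|$. Blocking: a strictly increasing list $\mathcal{I}=[1=\mathcal{I}_1<\dots<\mathcal{I}_{n_t+1}=n+1]$; block $(i,j)$ of a matrix is the submatrix with rows $\mathcal{I}_i:\mathcal{I}_{i+1}-1$ and columns $\mathcal{I}_j:\mathcal{I}_{j+1}-1$, and $B_{i:j,k:l}$ denotes a range of blocks. The hypotheses model a floating-point block LU factorization (unit roundoff $u$) in which the Schur complement updates are performed in order. *)

(* Defs.v *)
From HB Require Import structures.
From mathcomp Require Import all_boot all_order all_algebra.
Set Implicit Arguments. Unset Strict Implicit. Unset Printing Implicit Defensive.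
Import Order.TTheory GRing.Theory Num.Theory.
Local Open Scope ring_scope.

Section Defs.
Variable R : realFieldType.

(* Total (0-indexed) entry accessor: out-of-range entries read as 0. *)
Definition mget {m n : nat} (M : 'M[R]_(m, n)) (i j : nat) : R :=
  match (insub i : option 'I_m), (insub j : option 'I_n) with
  | Some i', Some j' => M i' j'
  | _, _ => 0
  end.

Definition subm {m n : nat} (M : 'M[R]_(m, n)) (r0 h c0 w : nat) : 'M[R]_(h, w) :=
  \matrix_(i < h, j < w) mget M (r0 + i) (c0 + j).

(* A list of cut points 0 = p_0 < p_1 < ... < p_s = m : a partition of 0..m-1
   into (nonempty) contiguous blocks [p_i, p_{i+1}). *)
Definition cuts (p : seq nat) (m : nat) : bool :=
  [&& sorted ltn p, head 1%N p == 0%N & last 0%N p == m].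

Definition blockof {m n : nat} (B : 'M[R]_(m, n)) (pr pc : seq nat) (i j : nat) :=
  subm B (nth 0%N pr i) (nth 0%N pr i.+1 - nth 0%N pr i)
         (nth 0%N pc j) (nth 0%N pc j.+1 - nth 0%N pc j).

Definition mxnorm_family (nrm : forall m n : nat, 'M[R]_(m, n) -> R) : Prop :=
  forall m n : nat,
    [/\ forall A : 'M[R]_(m, n), nrm m n A = 0 -> A = 0,
        forall (a : R) (A : 'M[R]_(m, n)), nrm m n (a *: A) = `|a| * nrm m n A
      & forall A B : 'M[R]_(m, n), nrm m n (A + B) <= nrm m n A + nrm m n B].

Definition dim_invariant (nrm : forall m n : nat, 'M[R]_(m, n) -> R) : Prop :=
  forall (m n : nat) (B : 'M[R]_(m, n)) (pr pc : seq nat),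
    cuts pr m -> cuts pc n ->
    (forall i j : nat, (i < (size pr).-1)%N -> (j < (size pc).-1)%N ->
       nrm _ _ (blockof B pr pc i j) <= nrm _ _ B)
    /\ nrm _ _ B <= \sum_(i < (size pr).-1) \sum_(j < (size pc).-1)
                     nrm _ _ (blockof B pr pc i j).

Definition dim_invariant_norm_family (nrm : forall m n : nat, 'M[R]_(m, n) -> R) :=
  mxnorm_family nrm /\ dim_invariant nrm.

(* Blocking given by cut function I (0-indexed): block k is the index range
   [I k, I (k+1)).  For a matrix M whose first row/column is the global index o,
   blk I o M a b c d is the range of blocks  a..b-1 (rows) x c..d-1 (columns). *)
Definition blk (I : nat -> nat) (o : nat) {m n : nat} (M : 'M[R]_(m, n))
    (a b c d : nat) : 'M[R]_(I b - I a, I d - I c) :=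
  subm M (I a - o) (I b - I a) (I c - o) (I d - I c).

End Defs.

(* Main.v *)
Require Import Defs.
From HB Require Import structures.
From mathcomp Require Import all_boot all_order all_algebra.
From mathcomp Require Import zify ring lra.
Import Order.TTheory GRing.Theory Num.Theory.
Local Open Scope ring_scope.

Section H.
Variable R : realFieldType.

Lemma mget_ord m n (M : 'M[R]_(m,n)) (i : 'I_m) (j : 'I_n) : mget M i j = M i j.
Proof. by rewrite /mget !valK. Qed.

Lemma mget_out m n (M : 'M[R]_(m,n)) i j : ~~ ((i < m)%N && (j < n)%N) -> mget M i j = 0.
Proof.
rewrite negb_and => /orP[h|h]; rewrite /mget.
  by rewrite (insubN 'I_m h).
by case: (insub i) => // ?; rewrite (insubN 'I_n h).
Qed.

Lemma mget_subm m n (M : 'M[R]_(m,n)) r0 h c0 w i j :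
  mget (subm M r0 h c0 w) i j =
  if (i < h)%N && (j < w)%N then mget M (r0 + i) (c0 + j) else 0.
Proof.
case: (boolP ((i < h)%N && (j < w)%N)) => [/andP[hi hj]|hn]; last by rewrite mget_out.
by rewrite -[i]/(nat_of_ord (Ordinal hi)) -[j]/(nat_of_ord (Ordinal hj)) mget_ord mxE.
Qed.

Lemma mget0 m n i j : mget (0 : 'M[R]_(m,n)) i j = 0.
Proof.
case: (boolP ((i < m)%N && (j < n)%N)) => [/andP[hi hj]|h]; last by rewrite mget_out.
by rewrite -[i]/(nat_of_ord (Ordinal hi)) -[j]/(nat_of_ord (Ordinal hj)) mget_ord mxE.
Qed.

Lemma mget_subm_in m n (M : 'M[R]_(m,n)) r0 h c0 w i j : (i < h)%N -> (j < w)%N ->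
  mget (subm M r0 h c0 w) i j = mget M (r0 + i) (c0 + j).
Proof. by move=> hi hj; rewrite mget_subm hi hj. Qed.

Lemma mgetB m n (A B : 'M[R]_(m,n)) i j : mget (A - B) i j = mget A i j - mget B i j.
Proof.
case: (boolP ((i < m)%N && (j < n)%N)) => [/andP[hi hj]|h].
  by rewrite -[i]/(nat_of_ord (Ordinal hi)) -[j]/(nat_of_ord (Ordinal hj)) !mget_ord !mxE.
by rewrite !mget_out // subr0.
Qed.

Lemma mget_mul m p n (A : 'M[R]_(m,p)) (B : 'M[R]_(p,n)) i j : (i < m)%N -> (j < n)%N ->
  mget (A *m B) i j = \sum_(0 <= l < p) mget A i l * mget B l j.
Proof.
move=> hi hj.
rewrite -[i]/(nat_of_ord (Ordinal hi)) -[j]/(nat_of_ord (Ordinal hj)) mget_ord mxE big_mkord.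
by apply: eq_bigr => l _; rewrite !mget_ord.
Qed.

Lemma mget_msm m1 n1 m2 n2 (A : 'M[R]_(m1,n1)) (B : 'M[R]_(m2,n2)) r0 h c0 p r1 c1 w i j :
  (i < h)%N -> (j < w)%N ->
  mget (subm A r0 h c0 p *m subm B r1 p c1 w) i j =
  \sum_(0 <= l < p) mget A (r0 + i) (c0 + l) * mget B (r1 + l) (c1 + j).
Proof.
move=> hi hj; rewrite mget_mul //; apply: eq_big_nat => l /andP[_ hl].
by rewrite !mget_subm hi hj hl.
Qed.

Variable nrm : forall m n : nat, 'M[R]_(m, n) -> R.
Hypothesis Hn : dim_invariant_norm_family nrm.

Lemma nrm_eq m1 n1 m2 n2 (M1 : 'M[R]_(m1,n1)) (M2 : 'M[R]_(m2,n2)) :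
  m1 = m2 -> n1 = n2 ->
  (forall i j, (i < m1)%N -> (j < n1)%N -> mget M1 i j = mget M2 i j) ->
  nrm _ _ M1 = nrm _ _ M2.
Proof.
move=> e1 e2; subst m2 n2 => H; congr (nrm _ _ _).
by apply/matrixP => i j; rewrite -!mget_ord H.
Qed.

Lemma nrm0 m n : nrm _ _ (0 : 'M[R]_(m,n)) = 0.
Proof.
case: (Hn) => [/(_ m n) [_ Hs _] _].
by rewrite -(scale0r (0 : 'M[R]_(m,n))) Hs normr0 mul0r.
Qed.

Lemma nrmN m n (A : 'M[R]_(m,n)) : nrm _ _ (- A) = nrm _ _ A.
Proof.
case: (Hn) => [/(_ m n) [_ Hs _] _].
by rewrite -scaleN1r Hs normrN normr1 mul1r.
Qed.

Lemma nrm_ge0 m n (A : 'M[R]_(m,n)) : 0 <= nrm _ _ A.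
Proof.
case: (Hn) => [/(_ m n) [_ _ Ht] _].
have := Ht A (- A); rewrite subrr nrm0 nrmN => h; lra.
Qed.

Lemma nrm_triB m n (A B : 'M[R]_(m,n)) : nrm _ _ (A - B) <= nrm _ _ A + nrm _ _ B.
Proof.
case: (Hn) => [/(_ m n) [_ _ Ht] _].
by rewrite -(@nrmN _ _ B); apply: Ht.
Qed.

Lemma cut1 m r0 h : (0 < h)%N -> (r0 + h <= m)%N ->
  exists p i, [/\ cuts p m, (i < (size p).-1)%N, nth 0%N p i = r0 & nth 0%N p i.+1 = (r0 + h)%N].
Proof.
move=> h0 hm.
case: (posnP r0) => [r00|r0p]; case: (ltnP (r0 + h) m) => hm'.
- by exists [:: 0%N; h; m], 0%N; split; rewrite /cuts /=; lia.
- by exists [:: 0%N; m], 0%N; split; rewrite /cuts /=; lia.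
- by exists [:: 0%N; r0; (r0 + h)%N; m], 1%N; split; rewrite /cuts /=; lia.
- by exists [:: 0%N; r0; m], 1%N; split; rewrite /cuts /=; lia.
Qed.

Lemma subm_le m n (M : 'M[R]_(m,n)) r0 h c0 w :
  (r0 + h <= m)%N -> (c0 + w <= n)%N -> nrm _ _ (subm M r0 h c0 w) <= nrm _ _ M.
Proof.
move=> hm wn.
case: (posnP h) => [h0|hp].
  subst h; rewrite (_ : subm _ _ _ _ _ = 0) ?nrm0 ?nrm_ge0 //.
  by apply/matrixP => -[].
case: (posnP w) => [w0|wp].
  subst w; rewrite (_ : subm _ _ _ _ _ = 0) ?nrm0 ?nrm_ge0 //.
  by apply/matrixP => ? -[].
have [pr [i [cr ir e1 e2]]] := @cut1 _ _ _ hp hm.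
have [pc [j [cc jc f1 f2]]] := @cut1 _ _ _ wp wn.
case: Hn => _ /(_ m n M pr pc cr cc) [H _].
have := H i j ir jc.
rewrite (@nrm_eq _ _ _ _ (blockof M pr pc i j) (subm M r0 h c0 w)) //.
- by rewrite e1 e2 addKn.
- by rewrite f1 f2 addKn.
move=> i' j' _ _; rewrite /blockof !mget_subm e1 e2 f1 f2 !addKn.
by [].
Qed.


Lemma mono3 (c u x X : R) : 0 <= c -> 0 < u -> 0 <= x -> x <= X -> c * u * x <= c * u * X.
Proof. move=> *; apply: ler_wpM2l => //; apply: mulr_ge0 => //; exact: ltW. Qed.

Lemma mono4 (c u x y X Y : R) : 0 <= c -> 0 < u -> 0 <= x -> 0 <= y -> x <= X -> y <= Y ->
  c * u * x * y <= c * u * X * Y.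
Proof.
move=> *; rewrite -!(mulrA (c * u)); apply: ler_wpM2l; first by apply: mulr_ge0 => //; exact: ltW.
exact: ler_pM.
Qed.

Lemma sum_shift (F : nat -> R) a b : (a <= b)%N ->
  \sum_(a <= l < b) F l = \sum_(0 <= l < b - a) F (a + l)%N.
Proof.
move=> hab; rewrite -{1}[a]add0n big_addn.
by apply: eq_bigr => l _; rewrite addnC.
Qed.

Lemma ring_aux (x y a b a' b' : R) : a = a' -> b = b' ->
  x - (a + b) = (y - b') - (y - (x - a')).
Proof. by move=> -> ->; lra. Qed.

Lemma sum_if (g : nat -> R) N :
  \sum_(l < N.+1) (if (l.+1 < N.+1)%N then g l else 0) = \sum_(l < N) g l.
Proof.
rewrite big_ord_recr /= ltnn addr0.
by apply: eq_bigr => l _; rewrite /= ltnS ltn_ord.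
Qed.

Lemma comb (Nk b0 b1 b2 b3 x y S c1 c2 c3 c4 u l r : R) :
  Nk <= b0 + b1 + b2 + b3 -> b0 <= x -> b1 <= c2 * u * l * r -> b2 <= c1 * u * l * r ->
  b3 <= S + (y + c3 * u * l * r) -> c4 = c1 + c2 + c3 ->
  Nk <= x + (y + c4 * u * l * r) + S.
Proof. move=> h0 h1 h2 h3 h4 ->; rewrite !mulrDl; lra. Qed.

Lemma fin_ineq (S1 S2 S3 u r a l x : R) :
  S1 * u * (r * a) + S2 * u * (r * a) + S3 * u * l * x <= (S1 + S2) * u * r * a + S3 * u * l * x.
Proof. rewrite !mulrDl !mulrA; lra. Qed.

Lemma bigmax_ge N (F : nat -> R) k : (k < N)%N -> F k <= \big[Num.max/0]_(i < N) F i.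
Proof.
elim: N F k => // N IH F [|k] hk; rewrite big_ord_recl /= le_max.
  by rewrite lexx.
apply/orP; right.
exact: (IH (fun i => F i.+1) k hk).
Qed.

End H.

Section Blocks.
Variables (nt : nat) (I : nat -> nat).
Hypothesis HI0 : I 0%N = 0%N.
Hypothesis HIinc : forall k, (k < nt)%N -> (I k < I k.+1)%N.

Lemma Imono x y : (x <= y)%N -> (y <= nt)%N -> (I x <= I y)%N.
Proof.
move=> hxy; elim: y hxy => [|y IH]; first by rewrite leqn0 => /eqP->.
rewrite leq_eqVlt => /orP[/eqP->//|hxy] hy.
exact: (leq_trans (IH hxy (ltnW hy)) (ltnW (HIinc y hy))).
Qed.

Lemma Ifind c : (c < I nt)%N -> exists j, [/\ (j < nt)%N, (I j <= c)%N & (c < I j.+1)%N].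
Proof.
suff: forall N, (N <= nt)%N -> (c < I N)%N -> exists j, [/\ (j < N)%N, (I j <= c)%N & (c < I j.+1)%N].
  by move=> H; apply: H.
elim=> [|N IH] hN hc; first by rewrite HI0 in hc.
case: (ltnP c (I N)) => h.
  by have [j [? ? ?]] := IH (ltnW hN) h; exists j; split => //; apply: ltnW.
by exists N; split.
Qed.
End Blocks.

Theorem theorem2p3 (R : realFieldType)
  (nrm : forall m n : nat, 'M[R]_(m, n) -> R)
  (Hnrm : dim_invariant_norm_family nrm)
  (u : R) (Hu : 0 < u)
  (n nt : nat) (I : nat -> nat)
  (Hnt : (0 < nt)%N)
  (HI0 : I 0%N = 0%N) (HInt : I nt = n)
  (HIinc : forall k, (k < nt)%N -> (I k < I k.+1)%N)
  (A L Rh : 'M[R]_n)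
  (HA0 : A != 0)
  (HL : forall i j, (i < j)%N -> (j < nt)%N -> blk I 0 L i i.+1 j j.+1 = 0)
  (HR : forall i j, (j < i)%N -> (i < nt)%N -> blk I 0 Rh i i.+1 j j.+1 = 0)
  (Ak : forall k : nat, 'M[R]_(I nt - I k))
  (HA1 : forall i j : nat, mget (Ak 0%N) i j = mget A i j)
  (c11 c12 c21 c22A c22LU : nat -> R)
  (Hc : forall k, [/\ 0 <= c11 k, 0 <= c12 k, 0 <= c21 k, 0 <= c22A k & 0 <= c22LU k])
  (H11 : forall k, (k < nt)%N ->
     nrm _ _ (blk I (I k) (Ak k) k k.+1 k k.+1
              - blk I 0 L k k.+1 k k.+1 *m blk I 0 Rh k k.+1 k k.+1)
     <= c11 k * u * nrm _ _ (blk I (I k) (Ak k) k k.+1 k k.+1))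
  (H12 : forall k, (k.+1 < nt)%N ->
     nrm _ _ (blk I (I k) (Ak k) k k.+1 k.+1 nt
              - blk I 0 L k k.+1 k k.+1 *m blk I 0 Rh k k.+1 k.+1 nt)
     <= c12 k * u * nrm _ _ (blk I 0 L k k.+1 k k.+1)
                  * nrm _ _ (blk I 0 Rh k k.+1 k.+1 nt))
  (H21 : forall k, (k.+1 < nt)%N ->
     nrm _ _ (blk I (I k) (Ak k) k.+1 nt k k.+1
              - blk I 0 L k.+1 nt k k.+1 *m blk I 0 Rh k k.+1 k k.+1)
     <= c21 k * u * nrm _ _ (blk I 0 L k.+1 nt k k.+1)
                  * nrm _ _ (blk I 0 Rh k k.+1 k k.+1))
  (H22 : forall k, (k.+1 < nt)%N ->
     nrm _ _ (Ak k.+1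
              - (blk I (I k) (Ak k) k.+1 nt k.+1 nt
                 - blk I 0 L k.+1 nt k k.+1 *m blk I 0 Rh k k.+1 k.+1 nt))
     <= c22A k * u * nrm _ _ (blk I (I k) (Ak k) k.+1 nt k.+1 nt)
        + c22LU k * u * nrm _ _ (blk I 0 L k.+1 nt k k.+1)
                      * nrm _ _ (blk I 0 Rh k k.+1 k.+1 nt)) :
  let rho := \big[Num.max/0]_(k < nt) (nrm _ _ (Ak k) / nrm _ _ A) in
  let CA := \sum_(k < nt) c11 k + \sum_(k < nt.-1) c22A k in
  let CLU := \sum_(k < nt.-1) (c21 k + c12 k + c22LU k) in
  nrm _ _ (A - L *m Rh) <= CA * u * rho * nrm _ _ A + CLU * u * nrm _ _ L * nrm _ _ Rh.
Proof.
cbv zeta.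
set rho := (\big[Num.max/0]_(k < nt) _).
have Imon := @Imono nt I HIinc.
have ge0 := @nrm_ge0 R nrm Hnrm.
have neq := @nrm_eq R nrm.
have triB := @nrm_triB R nrm Hnrm.
have smle := @subm_le R nrm Hnrm.
have nA0 : 0 < nrm _ _ A.
  rewrite lt_def ge0 andbT; apply/eqP => h.
  by case: Hnrm => /(_ n n) [H0 _ _] _; move/eqP: HA0; apply; apply: H0.
have HAk : forall k, (k < nt)%N -> nrm _ _ (Ak k) <= rho * nrm _ _ A.
  move=> k hk; rewrite -ler_pdivrMr //.
  exact: (@bigmax_ge R nt (fun k => nrm _ _ (Ak k) / nrm _ _ A) k hk).
have LZ : forall k r c, (k < nt)%N -> (r < I k.+1)%N -> (I k.+1 <= c)%N -> mget L r c = 0.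
  move=> k r c hk hr hc.
  case: (ltnP c (I nt)) => hcn; last by rewrite mget_out // negb_and -!leqNgt -HInt hcn orbT.
  have hrn : (r < I nt)%N by exact: leq_trans hr (Imon k.+1 nt hk (leqnn nt)).
  have [i [hi hi1 hi2]] := @Ifind nt I HI0 _ hrn.
  have [j [hj hj1 hj2]] := @Ifind nt I HI0 _ hcn.
  have hik : (i <= k)%N.
    rewrite leqNgt; apply/negP => hki.
    have := Imon k.+1 i hki (ltnW hi); lia.
  have hkj : (k < j)%N.
    rewrite ltnNge; apply/negP => hjk.
    have := Imon j.+1 k.+1 hjk hk; lia.
  have := HL i j (leq_ltn_trans hik hkj) hj.
  move/(congr1 (fun M => mget M (r - I i) (c - I j))).
  rewrite mget0 mget_subm_in; last by lia.
  + by rewrite !subn0 !subnKC.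
  + by lia.
have RZ : forall k r c, (k < nt)%N -> (c < I k.+1)%N -> (I k.+1 <= r)%N -> mget Rh r c = 0.
  move=> k r c hk hc hr.
  case: (ltnP r (I nt)) => hrn; last by rewrite mget_out // negb_and -!leqNgt -HInt hrn.
  have hcn : (c < I nt)%N by exact: leq_trans hc (Imon k.+1 nt hk (leqnn nt)).
  have [i [hi hi1 hi2]] := @Ifind nt I HI0 _ hrn.
  have [j [hj hj1 hj2]] := @Ifind nt I HI0 _ hcn.
  have hjk : (j <= k)%N.
    rewrite leqNgt; apply/negP => hkj.
    have := Imon k.+1 j hkj (ltnW hj); lia.
  have hki : (k < i)%N.
    rewrite ltnNge; apply/negP => hik.
    have := Imon i.+1 k.+1 hik hk; lia.
  have := HR i j (leq_ltn_trans hjk hki) hi.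
  move/(congr1 (fun M => mget M (r - I i) (c - I j))).
  rewrite mget0 mget_subm_in; last by lia.
  + by rewrite !subn0 !subnKC.
  + by lia.
pose rA := rho * nrm _ _ A.
pose nL := nrm _ _ L.
pose nR := nrm _ _ Rh.
pose f := fun l => c11 l * u * rA + (if (l.+1 < nt)%N then
   c22A l * u * rA + (c21 l + c12 l + c22LU l) * u * nL * nR else 0).
pose N := fun k => nrm _ _ (Ak k - subm L (I k) (I nt - I k) (I k) (I nt - I k)
                              *m subm Rh (I k) (I nt - I k) (I k) (I nt - I k)).
have Hmain : forall d k, (k + d.+1 = nt)%N -> N k <= \sum_(k <= l < nt) f l.
  elim=> [|d IH] k hk.
    have hk' : k.+1 = nt by rewrite -hk addn1.
    have hknt : (k < nt)%N by rewrite -hk'.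
    have eI : I k.+1 = I nt by rewrite hk'.
    have hst : (I k < I k.+1)%N := HIinc k hknt.
    have [h11 _ _ _ _] := Hc k.
    rewrite big_ltn // big_geq ?hk' // addr0.
    have -> : f k = c11 k * u * rA by rewrite /f hk' ltnn addr0.
    have e1 : N k = nrm _ _ (blk I (I k) (Ak k) k k.+1 k k.+1
              - blk I 0 L k k.+1 k k.+1 *m blk I 0 Rh k k.+1 k k.+1).
      apply: neq; try by rewrite hk'.
      move=> i j hi hj.
      have hi' : (i < I k.+1 - I k)%N by rewrite hk'.
      have hj' : (j < I k.+1 - I k)%N by rewrite hk'.
      rewrite /blk !mgetB mget_subm_in // !mget_msm //.
      congr (_ - _); first by rewrite subnn.
      by rewrite hk' !subn0.
    rewrite e1.
    apply: le_trans (H11 k hknt) _.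
    apply: mono3 => //; try exact: ge0.
    apply: le_trans (HAk k hknt); rewrite /blk; apply: smle; clear -hst eI; lia.
  have hk1 : (k.+1 + d.+1 = nt)%N by clear -hk; lia.
  have hkn : (k.+1 < nt)%N by clear -hk; lia.
  have hknt : (k < nt)%N by clear -hk; lia.
  have IHk := IH k.+1 hk1.
  have [h11 h12 h21 h22A h22LU] := Hc k.
  have hst : (I k < I k.+1)%N := HIinc k hknt.
  have hte : (I k.+1 < I nt)%N := leq_trans (HIinc k.+1 hkn) (Imon k.+2 nt hkn (leqnn nt)).
  rewrite big_ltn //.
  have -> : f k = c11 k * u * rA + (c22A k * u * rA + (c21 k + c12 k + c22LU k) * u * nL * nR)
    by rewrite /f hkn.
  pose p := [:: 0%N; (I k.+1 - I k)%N; (I nt - I k)%N].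
  have cp : cuts p (I nt - I k) by rewrite /cuts /p /=; clear -hst hte; lia.
  pose M := Ak k - subm L (I k) (I nt - I k) (I k) (I nt - I k)
                              *m subm Rh (I k) (I nt - I k) (I k) (I nt - I k).
  have [_ Hsum] := (proj2 Hnrm) _ _ M p p cp cp.
  have Hs : N k <= nrm _ _ (blockof M p p 0 0) + nrm _ _ (blockof M p p 0 1)
          + nrm _ _ (blockof M p p 1 0) + nrm _ _ (blockof M p p 1 1).
    move: Hsum; rewrite !big_ord_recl !big_ord0 /= /bump /=.
    move=> H; apply: (le_trans H); rewrite !addr0 !addrA.
    by rewrite [(1 + 0)%N]/=.
  have e00 : nrm _ _ (blockof M p p 0 0) = nrm _ _ (blk I (I k) (Ak k) k k.+1 k k.+1
              - blk I 0 L k k.+1 k k.+1 *m blk I 0 Rh k k.+1 k k.+1).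
    apply: neq; [exact: subn0 | exact: subn0 | move=> i j hi hj].
    have hi' : (i < I k.+1 - I k)%N by move: hi; rewrite /= subn0.
    have hj' : (j < I k.+1 - I k)%N by move: hj; rewrite /= subn0.
    rewrite mget_subm_in // /M /blk !mgetB [nth _ p 0]/= !add0n.
    have hiN : (i < I nt - I k)%N by clear -hi' hte; lia.
    have hjN : (j < I nt - I k)%N by clear -hj' hte; lia.
    rewrite [X in _ = X - _]mget_subm_in // !mget_msm //.
    congr (_ - _); first by rewrite subnn.
    rewrite (@big_cat_nat _ _ _ (I k.+1 - I k) 0 (I nt - I k)) //; last by clear -hst hte; lia.
    rewrite [X in _ + X = _]big1_seq ?addr0; last first.
      move=> l /andP[_]; rewrite mem_index_iota => /andP[hl1 hl2].
      by rewrite (LZ k) ?mul0r //; clear -hl1 hl2 hi' hst; lia.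
    by apply: eq_big_nat => l _; rewrite !subn0 ?add0n.
  have el : forall x, (I k + (I k.+1 - I k + x) = I k.+1 + x)%N by move=> x; clear -hst; lia.
  have ed : (I nt - I k - (I k.+1 - I k) = I nt - I k.+1)%N by clear -hst hte; lia.
  have e01 : nrm _ _ (blockof M p p 0 1) = nrm _ _ (blk I (I k) (Ak k) k k.+1 k.+1 nt
              - blk I 0 L k k.+1 k k.+1 *m blk I 0 Rh k k.+1 k.+1 nt).
    apply: neq; [exact: subn0 | exact: ed | move=> i j hi hj].
    have hi' : (i < I k.+1 - I k)%N by move: hi; rewrite /= subn0.
    have hj' : (j < I nt - I k.+1)%N by move: hj; rewrite /= ed.
    rewrite mget_subm_in // /M /blk !mgetB [nth _ p 0]/= [nth _ p 1]/= !add0n.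
    have hiN : (i < I nt - I k)%N by clear -hi' hte; lia.
    have hjN : (I k.+1 - I k + j < I nt - I k)%N by clear -hj' hst hte; lia.
    rewrite [X in _ = X - _]mget_subm_in // !mget_msm //.
    congr (_ - _); first by rewrite subnn.
    rewrite (@big_cat_nat _ _ _ (I k.+1 - I k) 0 (I nt - I k)) //; last by clear -hst hte; lia.
    rewrite [X in _ + X = _]big1_seq ?addr0; last first.
      move=> l /andP[_]; rewrite mem_index_iota => /andP[hl1 hl2].
      by rewrite (LZ k) ?mul0r //; clear -hl1 hl2 hi' hst; lia.
    by apply: eq_big_nat => l _; rewrite !subn0 ?add0n el.
  have e10 : nrm _ _ (blockof M p p 1 0) = nrm _ _ (blk I (I k) (Ak k) k.+1 nt k k.+1
              - blk I 0 L k.+1 nt k k.+1 *m blk I 0 Rh k k.+1 k k.+1).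
    apply: neq; [exact: ed | exact: subn0 | move=> i j hi hj].
    have hi' : (i < I nt - I k.+1)%N by move: hi; rewrite /= ed.
    have hj' : (j < I k.+1 - I k)%N by move: hj; rewrite /= subn0.
    rewrite mget_subm_in // /M /blk !mgetB [nth _ p 0]/= [nth _ p 1]/= !add0n.
    have hjN : (j < I nt - I k)%N by clear -hj' hte; lia.
    have hiN : (I k.+1 - I k + i < I nt - I k)%N by clear -hi' hst hte; lia.
    rewrite [X in _ = X - _]mget_subm_in // !mget_msm //.
    congr (_ - _); first by rewrite subnn.
    rewrite (@big_cat_nat _ _ _ (I k.+1 - I k) 0 (I nt - I k)) //; last by clear -hst hte; lia.
    rewrite [X in _ + X = _]big1_seq ?addr0; last first.
      move=> l /andP[_]; rewrite mem_index_iota => /andP[hl1 hl2].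
      by rewrite (RZ k) ?mulr0 //; clear -hl1 hl2 hj' hst; lia.
    by apply: eq_big_nat => l _; rewrite !subn0 ?add0n el.
  have e11 : nrm _ _ (blockof M p p 1 1) = nrm _ _
      ((Ak k.+1 - subm L (I k.+1) (I nt - I k.+1) (I k.+1) (I nt - I k.+1)
                              *m subm Rh (I k.+1) (I nt - I k.+1) (I k.+1) (I nt - I k.+1))
       - (Ak k.+1 - (blk I (I k) (Ak k) k.+1 nt k.+1 nt
                 - blk I 0 L k.+1 nt k k.+1 *m blk I 0 Rh k k.+1 k.+1 nt))).
    apply: neq; [exact: ed | exact: ed | move=> i j hi hj].
    have hi' : (i < I nt - I k.+1)%N by move: hi; rewrite /= ed.
    have hj' : (j < I nt - I k.+1)%N by move: hj; rewrite /= ed.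
    rewrite mget_subm_in // /M /blk !mgetB [nth _ p 1]/=.
    have hiN : (I k.+1 - I k + i < I nt - I k)%N by clear -hi' hst hte; lia.
    have hjN : (I k.+1 - I k + j < I nt - I k)%N by clear -hj' hst hte; lia.
    rewrite [mget (subm (Ak k) _ _ _ _) _ _]mget_subm_in // !mget_msm //.
    rewrite (@big_cat_nat _ _ _ (I k.+1 - I k) 0 (I nt - I k)) //; last by clear -hst hte; lia.
    rewrite (@sum_shift R _ (I k.+1 - I k) (I nt - I k)); last by clear -hst hte; lia.
    apply: ring_aux.
      by apply: eq_big_nat => l _; rewrite !subn0 !el.
    rewrite ed; apply: eq_big_nat => l _; by rewrite !el.
  have b00 : nrm _ _ (blockof M p p 0 0) <= c11 k * u * rA.
    rewrite e00; apply: le_trans (H11 k hknt) _; apply: mono3 => //; try exact: ge0.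
    apply: le_trans (HAk k hknt); rewrite /blk; apply: smle; clear -hst hte; lia.
  have b01 : nrm _ _ (blockof M p p 0 1) <= c12 k * u * nL * nR.
    rewrite e01; apply: le_trans (H12 k hkn) _; apply: mono4 => //; try exact: ge0;
      rewrite /blk; apply: smle; clear -hst hte HInt; lia.
  have b10 : nrm _ _ (blockof M p p 1 0) <= c21 k * u * nL * nR.
    rewrite e10; apply: le_trans (H21 k hkn) _; apply: mono4 => //; try exact: ge0;
      rewrite /blk; apply: smle; clear -hst hte HInt; lia.
  have b11 : nrm _ _ (blockof M p p 1 1) <= \sum_(k.+1 <= l < nt) f l
        + (c22A k * u * rA + c22LU k * u * nL * nR).
    rewrite e11; apply: le_trans (triB _ _ _ _) _; apply: lerD; first exact: IHk.
    apply: le_trans (H22 k hkn) _; apply: lerD.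
      apply: mono3 => //; try exact: ge0.
      apply: le_trans (HAk k hknt); rewrite /blk; apply: smle; clear -hst hte; lia.
    apply: mono4 => //; try exact: ge0;
      rewrite /blk; apply: smle; clear -hst hte HInt; lia.
  exact: (@comb R _ _ _ _ _ _ _ _ _ _ _ _ _ _ _ Hs b00 b01 b10 b11 erefl).
have e0 : nrm _ _ (A - L *m Rh) = N 0%N.
  apply: neq; [by rewrite HI0 subn0 | by rewrite HI0 subn0 | move=> i j hi hj].
  have hi' : (i < I nt - I 0)%N by rewrite HI0 subn0 HInt.
  have hj' : (j < I nt - I 0)%N by rewrite HI0 subn0 HInt.
  rewrite /N !mgetB HA1 mget_mul // mget_msm //.
  congr (_ - _); rewrite HI0 subn0 HInt; apply: eq_big_nat => l _; by rewrite !add0n.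
have hN : (0 + (nt.-1).+1 = nt)%N by rewrite add0n prednK.
have HN0 := Hmain nt.-1 0%N hN.
rewrite e0; apply: le_trans HN0 _.
have [nt' ent] : exists nt', nt = nt'.+1 by exists nt.-1; rewrite prednK.
rewrite /f big_split /= !big_mkord ent (@sum_if R (fun l => c22A l * u * rA + (c21 l + c12 l + c22LU l) * u * nL * nR)) big_split /= -!mulr_suml addrA.
rewrite /rA /nL /nR /=.
exact: fin_ineq.
Qed.
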